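(* Let $X=\{1,\dots,k\}^{\mathbb N}$ with the shift $T$, let $\log p$ be a real Hölder continuous normalized potential with Gibbs state $\mu$, and let $H:X\to\mathbb R$ be a Hölder continuous positive function. For every $\beta\in\mathbb R$, let $\nu_\beta$ be the eigenprobability of $\mathcal L_{-\beta\log H}^*$. Then for every $\beta\in\mathbb R$, every $n\in\mathbb N$ and every continuous $f:X\to\mathbb C$, $$\int f\,d\nu_\beta=\int (\Lambda_n)^{-1}\,E_\mu(\Lambda_n f\mid \mathcal F_n)\,d\nu_\beta .$$
   Context: $X=\{1,\dots,k\}^{\mathbb N}$ with the product topology, $T$ the left shift (each point has exactly $k$ preimages). For continuous $A:X\to\mathbb R$ the Ruelle operator is $\mathcal L_A(f)(x)=\sum_{T(z)=x}e^{A(z)}f(z)$, and its dual acts on probabilities by $\int f\,d(\mathcal L_A^*\nu)=\int \mathcal L_A(f)\,d\nu$. The potential $\log p$ (with $p>0$ Hölder) is normalized: $\mathcal L_p(1)=\sum_{T(z)=x}p(z)=1$, where $\mathcal L_p:=\mathcal L_{\log p}$; $\mu$ is the probability with $\mathcal L_p^*\mu=\mu$. Write $\lambda=p^{-1}$, $\lambda^{[n]}(x)=\prod_{j=0}^{n-1}p(T^jx)^{-1}$, $H^{\beta[n]}(x)=\prod_{j=0}^{n-1}H(T^jx)^{\beta}$ and $\Lambda_n=H^{-\beta[n]}\lambda^{[n]}$. For Hölder positive $H$ and $\beta\in\mathbb R$, $\lambda_\beta>0$ denotes the largest eigenvalue of $\mathcal L_\beta:=\mathcal L_{-\beta\log H}$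 (so $\mathcal L_\beta f(x)=\sum_{T(z)=x}H(z)^{-\beta}f(z)$) and $\nu_\beta$ the unique probability with $\mathcal L_\beta^*\nu_\beta=\lambda_\beta\nu_\beta$. $\mathcal F_n=T^{-n}\mathcal B$ with $\mathcal B$ the Borel $\sigma$-algebra, and $E_\mu(f\mid\mathcal F_n)$ is the conditional expectation with respect to $\mu$; it equals $(\mathcal L_p^n f)\circ T^n$. *)

(* Defs.v *)
From HB Require Import structures.
From mathcomp Require Import all_boot all_order all_algebra.
From mathcomp Require Import all_classical all_reals all_analysis.
From mathcomp Require Import complex.

Set Implicit Arguments.
Unset Strict Implicit.
Unset Printing Implicit Defensive.

Import Order.TTheory GRing.Theory Num.Theory.
Import numFieldNormedType.Exports.
Local Open Scope ring_scope.
Local Open Scope classical_set_scope.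

Definition Sym (k : nat) : Type := discrete_topology 'I_k.+1.
HB.instance Definition _ (k : nat) := Choice.on (Sym k).
HB.instance Definition _ (k : nat) := isPointed.Build (Sym k) ord0.
HB.instance Definition _ (k : nat) := Nbhs.on (Sym k).
HB.instance Definition _ (k : nat) := Topological.on (Sym k).

Definition Xsp (k : nat) : Type := prod_topology (fun _ : nat => Sym k).
HB.instance Definition _ k := Pointed.copy (Xsp k) (nat -> Sym k).
HB.instance Definition _ k := Nbhs.on (Xsp k).
HB.instance Definition _ k := Topological.on (Xsp k).

Definition X (k : nat) : Type := g_sigma_algebraType (@open (Xsp k)).

(* the left shift T and the concatenation a.x (the k+1 preimages of x under T
   are exactly the points scons a x) *)
Definition shift {k : nat} (x : Xsp k) : Xsp k := fun n => x n.+1.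
Definition scons {k : nat} (a : 'I_k.+1) (x : Xsp k) : Xsp k :=
  fun n => if n is m.+1 then x m else a.

(** * Hoelder continuity on X, for the standard metric d(x,y) = theta^N(x,y),
    N(x,y) = first index where x and y differ (all such metrics give the same
    class of Hoelder functions). *)
Definition holder {R : realType} {k : nat} (g : Xsp k -> R) : Prop :=
  exists (C theta : R), 0 < theta < 1 /\
    forall (n : nat) (x y : Xsp k),
      (forall i, (i < n)%N -> x i = y i) -> `|g x - g y| <= C * theta ^+ n.

(** * Ruelle operators  L_A f (x) = sum_{T z = x} e^{A z} f z *)
Definition ruelle {R : realType} {k : nat} (A : Xsp k -> R) (f : Xsp k -> R)
  : Xsp k -> R :=
  fun x => \sum_(a : 'I_k.+1) expR (A (scons a x)) * f (scons a x).

Definition ruelleC {R : realType} {k : nat} (A : Xsp k -> R) (f : Xsp k -> R[i])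
  : Xsp k -> R[i] :=
  fun x => \sum_(a : 'I_k.+1) ((expR (A (scons a x)))%:C)%C * f (scons a x).

Definition is_eigenvalue_ruelle {R : realType} {k : nat} (A : Xsp k -> R)
    (lam : R) : Prop :=
  exists h : Xsp k -> R, continuous h /\ (exists x : Xsp k, h x != 0) /\
    forall x, ruelle A h x = lam * h x.

Definition is_largest_eigenvalue_ruelle {R : realType} {k : nat}
    (A : Xsp k -> R) (lam : R) : Prop :=
  is_eigenvalue_ruelle A lam /\
  forall l, is_eigenvalue_ruelle A l -> l <= lam.

(** * L_A^* nu = lam nu, i.e. int f d(L_A^* nu) := int L_A f dnu = lam int f dnu
    for every continuous f *)
Definition dual_eigen {R : realType} {k : nat} (A : Xsp k -> R) (lam : R)
    (nu : probability (X k) R) : Prop :=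
  forall f : Xsp k -> R, continuous f ->
    Rintegral nu setT (ruelle A f : X k -> R) = lam * Rintegral nu setT (f : X k -> R).

Definition cintegral {R : realType} {k : nat} (nu : probability (X k) R)
    (f : Xsp k -> R[i]) : R[i] :=
  ((Rintegral nu setT ((fun x => complex.Re (f x)) : X k -> R)) +i*
   (Rintegral nu setT ((fun x => complex.Im (f x)) : X k -> R)))%C.

Definition bprod {R : realType} {k : nat} (n : nat) (g : Xsp k -> R)
  : Xsp k -> R :=
  fun x => \prod_(j < n) g (iter j shift x).

(* Lambda_n = H^{-beta[n]} lambda^{[n]}, with lambda = p^{-1} *)
Definition Lambda {R : realType} {k : nat} (p H : Xsp k -> R) (beta : R)
    (n : nat) : Xsp k -> R :=
  fun x => bprod n (fun z => (H z `^ beta)^-1) x * bprod n (fun z => (p z)^-1) x.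

(** * E_mu(f | F_n) = (L_p^n f) o T^n, where L_p = L_{log p}: the continuous
    version of the conditional expectation w.r.t. the Gibbs state mu of the
    normalized potential log p (this is the version used in the paper). *)
Definition condexp {R : realType} {k : nat} (p : Xsp k -> R) (n : nat)
    (f : Xsp k -> R[i]) : Xsp k -> R[i] :=
  fun x => iter n (ruelleC (fun z => ln (p z))) f (iter n shift x).

(* Main.v *)
Require Import Defs.
From HB Require Import structures.
From mathcomp Require Import all_boot all_order all_algebra.
From mathcomp Require Import all_classical all_reals all_analysis.
From mathcomp Require Import complex.
From mathcomp Require Import ring lra.
Import Order.TTheory GRing.Theory Num.Theory.
Import numFieldNormedType.Exports.
Local Open Scope ring_scope.
Section Alg.
Variables (R : realType) (k : nat).
Local Notation shift := (@Defs.shift k).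
Implicit Types (A B : Xsp k -> R) (u f g : Xsp k -> R).

Lemma shift_scons (a : 'I_k.+1) (x : Xsp k) : shift (scons a x) = x.
Proof. by []. Qed.

Lemma iter_shift_scons j (a : 'I_k.+1) (x : Xsp k) :
  iter j.+1 shift (scons a x) = iter j shift x.
Proof. by rewrite iterSr. Qed.

Lemma ruelle_shift A u g x :
  ruelle A (fun z => u z * g (shift z)) x = g x * ruelle A u x.
Proof.
rewrite /ruelle mulr_sumr; apply: eq_bigr => a _.
by rewrite shift_scons mulrA mulrC.
Qed.

Lemma iter_ruelle_shift n A u g :
  iter n (ruelle A) (fun z => u z * g (iter n shift z)) =
  (fun x => g x * iter n (ruelle A) u x).
Proof.
elim: n u => [|n IH] u; first by apply/funext => x; rewrite /= mulrC.
rewrite (iterSr n (ruelle A)) (iterSr n (ruelle A) u).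
have -> : ruelle A (fun z => u z * g (iter n.+1 shift z)) =
   (fun z => ruelle A u z * g (iter n shift z)).
  apply/funext => x.
  under eq_fun do rewrite iterSr.
  by rewrite (ruelle_shift A u (fun y => g (iter n shift y))) mulrC.
exact: IH.
Qed.

Definition wgt A B (z : Xsp k) : R := expR (A z) * (expR (B z))^-1.
Definition Lam A B n (z : Xsp k) : R := \prod_(j < n) wgt A B (iter j shift z).

Lemma Lam_scons A B n (a : 'I_k.+1) x :
  Lam A B n.+1 (scons a x) = wgt A B (scons a x) * Lam A B n x.
Proof.
rewrite /Lam big_ord_recl /=; congr (_ * _); apply: eq_bigr => j _.
by rewrite add0n -iterS iter_shift_scons.
Qed.

Lemma iter_ruelle_change n A B f :
  iter n (ruelle B) (fun z => Lam A B n z * f z) = iter n (ruelle A) f.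
Proof.
elim: n f => [|n IH] f.
  by apply/funext => x; rewrite /= /Lam big_ord0 mul1r.
rewrite (iterSr n (ruelle B)) (iterSr n (ruelle A) f).
have -> : ruelle B (fun z => Lam A B n.+1 z * f z) =
          (fun y => Lam A B n y * ruelle A f y).
  apply/funext => y; rewrite /ruelle mulr_sumr; apply: eq_bigr => a _.
  rewrite Lam_scons /wgt.
  have := expR_gt0 (B (scons a y)); set e := expR (B _) => e0.
  by field; rewrite gt_eqF.
exact: IH.
Qed.

Lemma Lam_gt0 A B n z : 0 < Lam A B n z.
Proof.
by apply: prodr_gt0 => j _; rewrite /wgt mulr_gt0 ?invr_gt0 ?expR_gt0.
Qed.

Lemma iter_ruelle_one n B :
  (forall x, ruelle B (fun=> 1) x = 1) -> iter n (ruelle B) (fun=> 1) = (fun=> 1).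
Proof.
move=> h; elim: n => //= n ->; exact/funext.
Qed.

Lemma key n A B f :
  (forall x, ruelle B (fun=> 1) x = 1) ->
  iter n (ruelle A) (fun x => (Lam A B n x)^-1 *
      iter n (ruelle B) (fun z => Lam A B n z * f z) (iter n shift x))
  = iter n (ruelle A) f.
Proof.
move=> hB; rewrite (iter_ruelle_change n A B f).
rewrite (iter_ruelle_shift n A (fun x => (Lam A B n x)^-1) (iter n (ruelle A) f)).
rewrite -(iter_ruelle_change n A B (fun x => (Lam A B n x)^-1)).
have -> : (fun z => Lam A B n z * (Lam A B n z)^-1) = (fun=> 1).
  by apply/funext => z; rewrite mulfV // gt_eqF // Lam_gt0.
rewrite iter_ruelle_one //; apply/funext => x; by rewrite mulr1.
Qed.
End Alg.
Arguments wgt {R k}.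
Arguments Lam {R k}.

Local Open Scope classical_set_scope.
Section Top.
Variables (R : realType) (k : nat).
Local Notation shift := (@Defs.shift k).

Lemma cont_into (Y : topologicalType) (g : Y -> Xsp k) :
  (forall i, continuous (fun y => g y i : Sym k)) -> continuous g.
Proof.
move=> hg y; apply/cvg_sup.
move=> i; move: y; apply/(@continuousP _ (initial_topology (@^~ i))) => A [B oB <-].
have -> : g @^-1` ((@^~ i) @^-1` B) = (fun y => g y i) @^-1` B by [].
by apply: open_comp => // + _; exact: hg.
Qed.

Lemma shift_cont : continuous shift.
Proof. apply: cont_into => i; exact: (@proj_continuous nat (fun _ => Sym k) i.+1). Qed.

Lemma scons_cont (a : 'I_k.+1) : continuous (@scons k a).
Proof.
apply: cont_into => -[|i] /=; first exact: cst_continuous.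
exact: (@proj_continuous nat (fun _ => Sym k) i).
Qed.

Lemma iter_shift_cont j : continuous (iter j shift).
Proof.
elim: j => [|j IH] /=; first by move=> x.
move=> x; apply: continuous_comp; [exact: IH|exact: shift_cont].
Qed.

Lemma holder_cont (g : Xsp k -> R) : holder g -> continuous g.
Proof.
move=> [C [th [/andP[th0 th1] hC]]] x.
have FF : ProperFilter (nbhs (x : Xsp k)) := nbhs_pfilter x.
have cyl : forall n, \forall y \near x, forall i, (i < n)%N -> x i = y i.
  elim=> [|n IH]; first by apply: (@nearW _ _ _ FF) => y i.
  have hn : \forall y \near x, y n = x n.
    have := @proj_continuous nat (fun _ => Sym k) n x [set x n]
      (@discrete_set1 (discrete_topology 'I_k.+1) (x n)).
    by [].
  near=> y => i; rewrite ltnS leq_eqVlt => /orP[/eqP->|].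
    by rewrite (near hn y).
  exact: (near IH y).
have hth : (fun n => C * th ^+ n) @ \oo --> (0:R).
  rewrite -(mulr0 C); apply: cvgM; first exact: cvg_cst.
  by apply: cvg_expr; rewrite ger0_norm ?ltW.
apply/cvgrPdist_lt => e e0.
have [N _ hN] := cvgr0_norm_lt _ hth _ e0.
have := hN N (leqnn N) => /= hCN.
move: (cyl N); apply: filterS => y hy.
apply: le_lt_trans (ler_norm _) _.
apply: le_lt_trans hCN.
by rewrite normr_id; apply: le_trans (hC N x y hy) (ler_norm _).
Unshelve. all: by end_near.
Qed.

Lemma cont_sum (T : topologicalType) (I : finType) (F : I -> T -> R) :
  (forall i, continuous (F i)) -> continuous (fun x => \sum_i F i x).
Proof.
move=> hF; have : forall s : seq I,
    continuous (fun x => \sum_(i <- s) F i x); last by apply.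
elim=> [|i s IH].
  have -> : (fun x => \sum_(i <- [::]) F i x) = fun=> 0.
    by apply/funext => x; rewrite big_nil.
  exact: cst_continuous.
have -> : (fun x => \sum_(j <- i :: s) F j x) = (fun x => F i x + \sum_(j <- s) F j x).
  by apply/funext => x; rewrite big_cons.
move=> x; exact: (continuousD (hF i x) (IH x)).
Qed.

Lemma cont_prod (T : topologicalType) (I : finType) (F : I -> T -> R) :
  (forall i, continuous (F i)) -> continuous (fun x => \prod_i F i x).
Proof.
move=> hF; have : forall s : seq I,
    continuous (fun x => \prod_(i <- s) F i x); last by apply.
elim=> [|i s IH].
  have -> : (fun x => \prod_(i <- [::]) F i x) = fun=> 1.
    by apply/funext => x; rewrite big_nil.
  exact: cst_continuous.
have -> : (fun x => \prod_(j <- i :: s) F j x) = (fun x => F i x * \prod_(j <- s) F j x).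
  by apply/funext => x; rewrite big_cons.
move=> x; exact: (continuousM (hF i x) (IH x)).
Qed.

Lemma ruelle_cont (A h : Xsp k -> R) :
  continuous A -> continuous h -> continuous (ruelle A h).
Proof.
move=> cA ch; apply: cont_sum => a x.
have h1 : {for x, continuous (fun y => expR (A (scons a y)))}.
  have h0 : {for x, continuous (A \o scons a)}.
    exact: continuous_comp (scons_cont a x) (cA _).
  exact: (continuous_comp h0 (@continuous_expR R _)).
have h2 : {for x, continuous (fun y => h (scons a y))}.
  exact: continuous_comp (scons_cont a x) (ch _).
exact: (continuousM h1 h2).
Qed.

Lemma iter_ruelle_cont n (A h : Xsp k -> R) :
  continuous A -> continuous h -> continuous (iter n (ruelle A) h).
Proof.
move=> cA ch; elim: n => [|n IH] //=; exact: ruelle_cont.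
Qed.
End Top.

Section Main.
Variables (R : realType) (k : nat).
Local Notation shift := (@Defs.shift k).

Lemma dual_iter n (A : Xsp k -> R) lam (nu : probability (X k) R) (h : Xsp k -> R) :
  continuous A -> continuous h -> dual_eigen A lam nu ->
  Rintegral nu setT (iter n (ruelle A) h : X k -> R) =
  lam ^+ n * Rintegral nu setT (h : X k -> R).
Proof.
move=> cA ch hd; elim: n => [|n IH]; first by rewrite expr0 mul1r.
rewrite /= hd; last exact: iter_ruelle_cont.
by rewrite IH exprS mulrA.
Qed.

Lemma wgt_cont (A B : Xsp k -> R) :
  continuous A -> continuous B -> continuous (wgt A B).
Proof.
move=> cA cB x.
have h1 : {for x, continuous (fun y => expR (A y))}.
  exact: (continuous_comp (cA x) (@continuous_expR R _)).
have h2 : {for x, continuous (fun y => (expR (B y))^-1)}.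
  apply: continuousV; first by rewrite gt_eqF ?expR_gt0.
  exact: (continuous_comp (cB x) (@continuous_expR R _)).
exact: (continuousM h1 h2).
Qed.

Lemma Lam_cont (A B : Xsp k -> R) n :
  continuous A -> continuous B -> continuous (Lam A B n).
Proof.
move=> cA cB; apply: cont_prod => j x.
exact: (continuous_comp (iter_shift_cont _ j x) (wgt_cont _ _ cA cB _)).
Qed.

Lemma real_main (A B : Xsp k -> R) lam (nu : probability (X k) R) n
  (fr : Xsp k -> R) :
  continuous A -> continuous B -> (forall x, ruelle B (fun=> 1) x = 1) ->
  0 < lam -> dual_eigen A lam nu -> continuous fr ->
  Rintegral nu setT (fr : X k -> R) =
  Rintegral nu setT ((fun x => (Lam A B n x)^-1 *
    iter n (ruelle B) (fun z => Lam A B n z * fr z) (iter n shift x)) : X k -> R).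
Proof.
move=> cA cB hB lam0 hd cf.
set g := (fun x => _ * _).
have cg : continuous g.
  rewrite /g iter_ruelle_change => x.
  have h1 : {for x, continuous (fun y => (Lam A B n y)^-1)}.
    apply: continuousV; first by rewrite gt_eqF ?Lam_gt0.
    exact: Lam_cont.
  have h2 : {for x, continuous (fun y => iter n (ruelle A) fr (iter n shift y))}.
    exact: (continuous_comp (iter_shift_cont _ n x) (iter_ruelle_cont _ _ n _ _ cA cf _)).
  exact: (continuousM h1 h2).
have E : iter n (ruelle A) g = iter n (ruelle A) fr by rewrite /g key.
apply: (@mulfI _ (lam ^+ n)); first by rewrite expf_neq0 // gt_eqF.
by rewrite -!(dual_iter n _ _ _ _ cA) // E.
Qed.

Lemma ReD (x y : R[i]) : complex.Re (x+y) = complex.Re x + complex.Re y.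
Proof. by case: x; case: y. Qed.
Lemma ImD (x y : R[i]) : complex.Im (x+y) = complex.Im x + complex.Im y.
Proof. by case: x; case: y. Qed.
Lemma ReMc (c : R) (x : R[i]) : complex.Re ((c%:C)%C * x) = c * complex.Re x.
Proof. case: x => a b /=. by rewrite mul0r subr0. Qed.
Lemma ImMc (c : R) (x : R[i]) : complex.Im ((c%:C)%C * x) = c * complex.Im x.
Proof. case: x => a b /=. by rewrite mul0r addr0. Qed.

Lemma Re_iter n (B : Xsp k -> R) (F : Xsp k -> R[i]) :
  (fun x => complex.Re (iter n (ruelleC B) F x)) =
  iter n (ruelle B) (fun x => complex.Re (F x)).
Proof.
elim: n => [|n IH] //=; rewrite -IH; apply/funext => x.
rewrite /ruelleC /ruelle (big_morph _ ReD (erefl (complex.Re 0))).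
by apply: eq_bigr => a _; rewrite ReMc.
Qed.

Lemma Im_iter n (B : Xsp k -> R) (F : Xsp k -> R[i]) :
  (fun x => complex.Im (iter n (ruelleC B) F x)) =
  iter n (ruelle B) (fun x => complex.Im (F x)).
Proof.
elim: n => [|n IH] //=; rewrite -IH; apply/funext => x.
rewrite /ruelleC /ruelle (big_morph _ ImD (erefl (complex.Im 0))).
by apply: eq_bigr => a _; rewrite ImMc.
Qed.
Lemma contA (H : Xsp k -> R) beta : (forall x, 0 < H x) -> continuous H ->
  continuous (fun z : Xsp k => - beta * ln (H z)).
Proof.
move=> Hp cH x.
have h1 : {for x, continuous (fun z : Xsp k => ln (H z))}.
  exact: (continuous_comp (cH x) (continuous_ln (Hp x))).
have h0 : {for x, continuous (fun _ : Xsp k => - beta)}.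
  have FF : Filter (nbhs (x : Xsp k)) := nbhs_filter x.
  exact: (@cvg_cst _ (- beta) _ _ FF).
exact: (continuousM h0 h1).
Qed.

Lemma contB (H : Xsp k -> R) : (forall x, 0 < H x) -> continuous H ->
  continuous (fun z : Xsp k => ln (H z)).
Proof.
move=> Hp cH x; exact: (continuous_comp (cH x) (continuous_ln (Hp x))).
Qed.
End Main.

Theorem lemma1p1 (R : realType) (k : nat)
  (p : Xsp k -> R) (p_pos : forall x, 0 < p x) (p_holder : holder p)
  (p_normalized : forall x, ruelle (fun z => ln (p z)) (fun=> 1) x = 1)
  (mu : probability (X k) R)
  (mu_gibbs : dual_eigen (fun z => ln (p z)) 1 mu)
  (H : Xsp k -> R) (H_pos : forall x, 0 < H x) (H_holder : holder H)
  (beta : R) (lam_beta : R) (lam_beta_pos : 0 < lam_beta)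
  (lam_beta_largest :
     is_largest_eigenvalue_ruelle (fun z => - beta * ln (H z)) lam_beta)
  (nu_beta : probability (X k) R)
  (nu_beta_eigen : dual_eigen (fun z => - beta * ln (H z)) lam_beta nu_beta)
  (n : nat) (f : Xsp k -> R[i])
  (f_cont : continuous (fun x => complex.Re (f x)) /\
            continuous (fun x => complex.Im (f x))) :
  cintegral nu_beta f =
  cintegral nu_beta (fun x =>
    ((Lambda p H beta n x)^-1)%:C%C *
    condexp p n (fun z => (Lambda p H beta n z)%:C%C * f z) x).
Proof.
have cH := holder_cont _ _ _ H_holder.
have cp := holder_cont _ _ _ p_holder.
have cA := contA _ _ H beta H_pos cH.
have cB := contB _ _ p p_pos cp.
have LamE : Lambda p H beta n =
    Lam (fun z => - beta * ln (H z)) (fun z => ln (p z)) n.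
  apply/funext => x; rewrite /Lambda /Lam /bprod -big_split.
  apply: eq_bigr => j _; rewrite /wgt lnK ?posrE // mulNr expRN.
  by rewrite /powR gt_eqF.
rewrite LamE /cintegral /condexp; case: f_cont => cRe cIm.
congr (_ +i* _)%C.
- rewrite (real_main _ _ _ _ _ _ n _ cA cB p_normalized lam_beta_pos nu_beta_eigen cRe).
  congr (Rintegral _ _ _); apply/funext => x; rewrite ReMc; congr (_ * _).
  have := congr1 (fun F => F (iter n Defs.shift x))
    (Re_iter _ _ n (fun z => ln (p z)) (fun z => ((Lam (fun z => - beta * ln (H z)) (fun z => ln (p z)) n z)%:C)%C * f z)).
  move=> /= ->; congr (iter _ _ _ _); apply/funext => z; by rewrite ReMc.
- rewrite (real_main _ _ _ _ _ _ n _ cA cB p_normalized lam_beta_pos nu_beta_eigen cIm).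
  congr (Rintegral _ _ _); apply/funext => x; rewrite ImMc; congr (_ * _).
  have := congr1 (fun F => F (iter n Defs.shift x))
    (Im_iter _ _ n (fun z => ln (p z)) (fun z => ((Lam (fun z => - beta * ln (H z)) (fun z => ln (p z)) n z)%:C)%C * f z)).
  move=> /= ->; congr (iter _ _ _ _); apply/funext => z; by rewrite ImMc.
Qed.
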